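(* Let $\mathcal{S}=(Q,E,\delta,Q_0,\Sigma,\ell)$ be a labeled finite-state automaton, $Q_S\subset Q$ a set of secret states, and $K$ a positive integer with $K>2^{|Q\setminus Q_S|}-2$. Then $\mathcal{S}$ is strongly infinite-step opaque with respect to $Q_S$ if and only if $\mathcal{S}$ is strongly $K$-step opaque with respect to $Q_S$.
   Context: A labeled finite-state automaton is $\mathcal{S}=(Q,E,\delta,Q_0,\Sigma,\ell)$ with finite state set $Q$, finite event alphabet $E$, transition relation $\delta\subset Q\times E\times Q$, initial states $Q_0\subset Q$, finite output alphabet $\Sigma$, and labeling $\ell:E\to\Sigma\cup\{\epsilon\}$ ($\epsilon$ the empty word), extended morphically to event words. A run $q\xrightarrow{s}q'$ ($s\in E^*$) is a sequence of transitions from $q$ to $q'$ reading $s$. A run is non-secret if none of its states (including first and last) lies in $Q_S$. Strong infinite-step opacity: $\mathcal{S}$ is strongly infinite-step opaque w.r.t. $Q_S$ if for every run $q_0\xrightarrow{s_1}q_1\xrightarrow{s_2}q_2$ with $q_0\in Q_0$ and $q_1\in Q_S$ there is a non-secret run $q_0'\xrightarrow{s_1'}q_1'\xrightarrow{s_2'}q_2'$ with $q_0'\in Q_0$, $\ell(s_1)=\ell(s_1')$, $\ell(s_2)=\ell(s_2')$. Strong $K$-step opacity ($K$ a positive integer): the same requirement imposed only on runs with $|\ell(s_2)|\le K$. *)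

(* Defs.v *)
From mathcomp Require Import all_boot.
Set Implicit Arguments. Unset Strict Implicit. Unset Printing Implicit Defensive.

(* A labeled finite-state automaton S = (Q, E, delta, Q0, Sigma, ell).
   The label function ell : E -> Sigma u {eps} is encoded as E -> option Sigma,
   None standing for the empty word eps. *)
Record LFSA := {
  state : finType;
  event : finType;
  output : finType;
  delta : state -> event -> state -> bool;
  init : {set state};
  lab : event -> option output
}.

Section Runs.
Variable S : LFSA.

Definition labw (s : seq (event S)) : seq (output S) := pmap (@lab S) s.

(* is_run q s qs q' : q --s--> q' is a run whose successive states
   (after q) are qs; so the states of the run are q :: qs. *)
Fixpoint is_run (q : state S) (s : seq (event S)) (qs : seq (state S))
    (q' : state S) : bool :=
  match s, qs with
  | [::], [::] => q == q'
  | e :: s', p :: qs' => delta q e p && is_run p s' qs' q'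
  | _, _ => false
  end.

Definition non_secret (QS : {set state S}) (q : state S) (qs : seq (state S)) :=
  all (fun p => p \notin QS) (q :: qs).

Definition covered (QS : {set state S}) (s1 s2 : seq (event S)) : Prop :=
  exists (q0' q1' q2' : state S) (s1' s2' : seq (event S)) (qs1 qs2 : seq (state S)),
    [/\ q0' \in init S, is_run q0' s1' qs1 q1', is_run q1' s2' qs2 q2',
        non_secret QS q0' (qs1 ++ qs2) &
        labw s1 = labw s1' /\ labw s2 = labw s2'].

Definition strongly_inf_step_opaque (QS : {set state S}) : Prop :=
  forall (q0 q1 q2 : state S) (s1 s2 : seq (event S)) (qs1 qs2 : seq (state S)),
    q0 \in init S -> is_run q0 s1 qs1 q1 -> is_run q1 s2 qs2 q2 -> q1 \in QS ->
    covered QS s1 s2.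

Definition strongly_K_step_opaque (QS : {set state S}) (K : nat) : Prop :=
  forall (q0 q1 q2 : state S) (s1 s2 : seq (event S)) (qs1 qs2 : seq (state S)),
    q0 \in init S -> is_run q0 s1 qs1 q1 -> is_run q1 s2 qs2 q2 -> q1 \in QS ->
    size (labw s2) <= K ->
    covered QS s1 s2.
End Runs.

(* Main.v *)
Require Import Defs.
From Stdlib Require Import ClassicalEpsilon Classical.
From mathcomp Require Import all_boot.
From mathcomp Require Import zify.
Set Implicit Arguments. Unset Strict Implicit. Unset Printing Implicit Defensive.

Definition pb (P : Prop) : bool := if excluded_middle_informative P then true else false.
Lemma pbP (P : Prop) : reflect P (pb P).
Proof. by rewrite /pb; case: excluded_middle_informative => H; constructor. Qed.

Lemma labw_cons (S : LFSA) (e : event S) s :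
  labw (e :: s) = if lab e is Some o then o :: labw s else labw s.
Proof. by rewrite /labw /=; case: (lab e). Qed.

Lemma labw_cat (S : LFSA) (s1 s2 : seq (event S)) : labw (s1 ++ s2) = labw s1 ++ labw s2.
Proof. exact: pmap_cat. Qed.

Lemma labw_nil (S : LFSA) : labw ([::] : seq (event S)) = [::].
Proof. by []. Qed.

Lemma run_cat (S : LFSA) (q q1 q2 : state S) s1 s2 qs1 qs2 :
  is_run q s1 qs1 q1 -> is_run q1 s2 qs2 q2 -> is_run q (s1 ++ s2) (qs1 ++ qs2) q2.
Proof.
elim: s1 q qs1 => [|e s IH] q [|p qs] //=; first by move/eqP->.
by move/andP=> [-> H] H2; rewrite (IH _ _ H H2).
Qed.

Lemma run_size (S : LFSA) (q q' : state S) s qs : is_run q s qs q' -> size qs = size s.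
Proof. by elim: s q qs => [|e s IH] q [|p qs] //= /andP [_ /IH ->]. Qed.

Lemma run_last (S : LFSA) (q q' : state S) s qs : is_run q s qs q' -> last q qs = q'.
Proof.
elim: s q qs => [|e s IH] q [|p qs] //=; first by move/eqP.
by move/andP=> [_ /IH].
Qed.

Lemma run_split (S : LFSA) (q q' : state S) s qs x y :
  is_run q s qs q' -> labw s = x ++ y ->
  exists s1 s2 qs1 qs2 m, [/\ qs = qs1 ++ qs2, is_run q s1 qs1 m,
     is_run m s2 qs2 q', labw s1 = x & labw s2 = y].
Proof.
elim: s q qs x => [|e s IH] q [|p qs] x //=.
- move=> Hq Hl; case: x Hl => // ; case: y => // _.
  exists [::], [::], [::], [::], q; split => //=; rewrite ?eqxx.
- move=> /andP[d r] Hl; case: x Hl => [|o x] Hl.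
    exists [::], (e :: s), [::], (p :: qs), q; split => //=; rewrite ?eqxx //.
    by rewrite d r.
  move: Hl; rewrite /labw /= -/(labw s); case E: (lab e) => [o'|] /= Hl.
    case: Hl => <- Hl.
    have [s1 [s2 [qs1 [qs2 [m [-> R1 R2 L1 L2]]]]]] := IH _ _ _ r Hl.
    exists (e :: s1), s2, (p :: qs1), qs2, m; split => //=.
      by rewrite d R1.
    by rewrite /labw /= E -/(labw s1) L1.
  have [s1 [s2 [qs1 [qs2 [m [-> R1 R2 L1 L2]]]]]] := IH _ _ (o :: x) r Hl.
  exists (e :: s1), s2, (p :: qs1), qs2, m; split => //=.
    by rewrite d R1.
  by rewrite /labw /= E -/(labw s1) L1.
Qed.

Lemma last_secret (S : LFSA) (QS : {set state S}) (q q' : state S) s qs :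
  is_run q s qs q' -> has (fun p => p \in QS) (q :: qs) ->
  exists a b qa qb p, [/\ labw s = labw a ++ labw b, is_run q a qa p, p \in QS,
     is_run p b qb q' & all (fun x => x \notin QS) qb].
Proof.
elim: s q qs => [|e s IH] q [|p1 qs] //=.
- move=> /eqP <-; rewrite orbF => Hq.
  exists [::], [::], [::], [::], q; split => //=; rewrite ?eqxx.
- move=> /andP[d r] H.
  case: (boolP (has (fun p => p \in QS) (p1 :: qs))) => Hh.
    have [a [b [qa [qb [p [L Ra Hp Rb Nb]]]]]] := IH _ _ r Hh.
    exists (e :: a), b, (p1 :: qa), qb, p; split => //=.
      by move: L; rewrite /labw /= => ->; case: (lab e).
    by rewrite d Ra.
  have Hq : q \in QS.
    move: H => /orP [//|H]; by move/negP: Hh.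
  have Nall : all (fun x => x \notin QS) (p1 :: qs).
    apply/allP => x Hx; apply/negP => Hin; move/negP: Hh; apply; apply/hasP; by exists x.
  exists [::], (e :: s), [::], (p1 :: qs), q; split => //; rewrite /= ?eqxx ?d ?r //.
Qed.

Definition NSreach (S : LFSA) (QS : {set state S}) (q : state S) (x : seq (output S))
  (m : state S) : Prop :=
  exists s qs, [/\ is_run q s qs m, non_secret QS q qs & labw s = x].

Definition nsw (S : LFSA) (QS : {set state S}) (x : seq (output S)) : Prop :=
  exists q0 m, q0 \in init S /\ NSreach QS q0 x m.

Definition Tl (S : LFSA) (QS : {set state S}) (p : state S) (x : seq (output S))
  (r : state S) : Prop :=
  exists b qb, [/\ is_run p b qb r, all (fun q => q \notin QS) qb & labw b = x].

Lemma NSreach_cat (S : LFSA) (QS : {set state S}) q x m y z :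
  NSreach QS q x m -> NSreach QS m y z -> NSreach QS q (x ++ y) z.
Proof.
move=> [s1 [qs1 [R1 N1 L1]]] [s2 [qs2 [R2 N2 L2]]].
exists (s1 ++ s2), (qs1 ++ qs2); split.
- exact: run_cat R1 R2.
- move: N1; rewrite /non_secret -cat_cons all_cat => -> /=.
  by move: N2; rewrite /non_secret /= => /andP[_ ->].
- by rewrite labw_cat L1 L2.
Qed.

Lemma NSreach_start (S : LFSA) (QS : {set state S}) q x m :
  NSreach QS q x m -> q \notin QS.
Proof. by move=> [s [qs [_ /andP[]]]]. Qed.

Lemma NSreach_end (S : LFSA) (QS : {set state S}) q x m :
  NSreach QS q x m -> m \notin QS.
Proof.
move=> [s [qs [R N _]]]; rewrite -(run_last R).
by move/allP: N; apply; exact: mem_last.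
Qed.

Lemma NSreach_split (S : LFSA) (QS : {set state S}) q x y z :
  NSreach QS q (x ++ y) z -> exists m, NSreach QS q x m /\ NSreach QS m y z.
Proof.
move=> [s [qs [R N L]]].
have [s1 [s2 [qs1 [qs2 [m [Eq R1 R2 L1 L2]]]]]] := run_split R L.
move: N; rewrite /non_secret Eq -cat_cons all_cat => /andP[N1 N2].
have Hm : m \notin QS.
  by rewrite -(run_last R1); move/allP: N1; apply; exact: mem_last.
exists m; split.
- by exists s1, qs1; split.
- by exists s2, qs2; split => //; rewrite /non_secret /= Hm.
Qed.

Lemma Tl_cat (S : LFSA) (QS : {set state S}) p x m y r :
  Tl QS p x m -> NSreach QS m y r -> Tl QS p (x ++ y) r.
Proof.
move=> [s1 [qs1 [R1 N1 L1]]] [s2 [qs2 [R2 N2 L2]]].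
exists (s1 ++ s2), (qs1 ++ qs2); split.
- exact: run_cat R1 R2.
- rewrite all_cat N1 /=.
  by move: N2; rewrite /non_secret /= => /andP[_ ->].
- by rewrite labw_cat L1 L2.
Qed.

Lemma Tl_split (S : LFSA) (QS : {set state S}) p x y r :
  Tl QS p (x ++ y) r -> x != [::] -> exists m, Tl QS p x m /\ NSreach QS m y r.
Proof.
move=> [s [qs [R N L]]] Hx.
have [s1 [s2 [qs1 [qs2 [m [Eq R1 R2 L1 L2]]]]]] := run_split R L.
move: N; rewrite Eq all_cat => /andP[N1 N2].
have Hm : m \notin QS.
  case: qs1 Eq R1 N1 => [|h t] _ R1 N1.
    move: (run_size R1); case: s1 L1 {R1} => // L1 _.
    by move: Hx; rewrite -L1.
  rewrite -(run_last R1) /=; move/allP: N1; apply; exact: mem_last.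
exists m; split.
- by exists s1, qs1; split.
- by exists s2, qs2; split => //; rewrite /non_secret /= Hm.
Qed.

Lemma covered_nsw (S : LFSA) (QS : {set state S}) s1 s2 :
  covered QS s1 s2 -> nsw QS (labw s1 ++ labw s2).
Proof.
move=> [q0 [q1 [q2 [s1' [s2' [qs1 [qs2 [H0 R1 R2 N [L1 L2]]]]]]]]].
exists q0, q2; split => //; exists (s1' ++ s2'), (qs1 ++ qs2); split => //.
- exact: run_cat R1 R2.
- by rewrite labw_cat L1 L2.
Qed.

Lemma nsw_covered (S : LFSA) (QS : {set state S}) s1 s2 :
  nsw QS (labw s1 ++ labw s2) -> covered QS s1 s2.
Proof.
move=> [q0 [z [H0 Hr]]].
have [m [[s1' [qs1 [R1 N1 L1]]] [s2' [qs2 [R2 N2 L2]]]]] := NSreach_split Hr.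
exists q0, m, z, s1', s2', qs1, qs2; split => //.
rewrite /non_secret -cat_cons all_cat.
move: N1; rewrite /non_secret => ->.
by move: N2; rewrite /non_secret /= => /andP[_ ->].
Qed.

Lemma card_family (S : LFSA) (QS : {set state S}) (K : nat) :
  0 < K -> 2 ^ #|~: QS| < K + 2 ->
  #|[set X in powerset (~: QS) | (X != set0) && (X != ~: QS)]| < K.
Proof.
move=> K0 HKb.
set F := [set X in _ | _].
case m0: (#|~: QS| == 0).
  have E0 : ~: QS = set0 by apply: cards0_eq; apply/eqP.
  have -> : F = set0.
    apply/setP => X; rewrite !inE ?powersetE E0 subset0.
    by case: (X == set0).
  by rewrite cards0.
have HF : F \subset powerset (~: QS) :\ set0 :\ (~: QS).
  apply/subsetP => X; rewrite !inE => /andP[-> /andP[-> ->]].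
  by [].
have C := subset_leq_card HF.
have E1 := cardsD1 set0 (powerset (~: QS)).
have E2 := cardsD1 (~: QS) (powerset (~: QS) :\ set0).
rewrite card_powerset in E1.
have H1 : set0 \in powerset (~: QS) by rewrite powersetE sub0set.
have H2 : (~: QS) \in powerset (~: QS) :\ set0.
  rewrite !inE ?powersetE subxx andbT.
  apply/eqP => E; move: m0; by rewrite E cards0.
rewrite H1 in E1; rewrite H2 in E2.
move: C E1 E2 HKb; set t := 2 ^ _; lia.
Qed.

Lemma core (S : LFSA) (QS : {set state S}) (K : nat) (p : state S) (u : seq (output S)) :
  0 < K -> 2 ^ #|~: QS| < K + 2 ->
  (forall v r, Tl QS p v r -> size v <= K -> nsw QS (u ++ v)) ->
  forall v r, Tl QS p v r -> nsw QS (u ++ v).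
Proof.
move=> K0 HKb HK v.
have [n] := ubnP (size v); elim: n v => // n IH v Hsz r T.
case: (leqP (size v) K) => Hle; first exact: HK T Hle.
apply: NNPP => Hno.
set N := size v.
pose B k := [set y | pb (exists z, NSreach QS y (drop k v) z)].
have HB : forall y k, y \in B k <-> exists z, NSreach QS y (drop k v) z.
  by move=> y k; rewrite inE; split => [/pbP|H]; last apply/pbP.
have Hsplit : forall k, 0 < k < N ->
    exists m, Tl QS p (take k v) m /\ NSreach QS m (drop k v) r.
  move=> k /andP[k0 kN]; apply: Tl_split; first by rewrite cat_take_drop.
  apply/eqP => E; move: (congr1 size E); rewrite size_take kN /=; lia.
have Hnot : forall k, 0 < k < N ->
    [&& B k != set0, B k != ~: QS & B k \subset ~: QS].
  move=> k Hk; have [m [Tm Rm]] := Hsplit k Hk.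
  apply/and3P; split.
  - apply/set0Pn; exists m; apply/HB; by exists r.
  - have Hks : size (take k v) < n.
      rewrite size_take; move: Hk Hsz; rewrite /N => /andP[_ kN]; rewrite ?kN; lia.
    have [q0 [y [Hq0 Hr]]] := IH _ Hks _ Tm.
    apply/eqP => E.
    have : y \in B k by rewrite E inE; exact: NSreach_end Hr.
    move/HB => [z Hz]; apply: Hno; exists q0, z; split => //.
    rewrite -(cat_take_drop k v) catA; exact: NSreach_cat Hr Hz.
  - apply/subsetP => y /HB [z Hz]; rewrite inE; exact: NSreach_start Hz.
have Hinj : forall k j, 0 < k -> k < j -> j < N -> B k != B j.
  move=> k j k0 kj jN; apply/eqP => E.
  have Hk : 0 < k < N by rewrite k0 /=; lia.
  have [m [Tm Rm]] := Hsplit k Hk.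
  have : m \in B j by rewrite -E; apply/HB; exists r.
  move/HB => [z Hz].
  have T' := Tl_cat Tm Hz.
  have Hs' : size (take k v ++ drop j v) < n.
    rewrite size_cat size_take size_drop; move: Hk Hsz; rewrite /N => /andP[_ kN]; rewrite ?kN; lia.
  have [q0 [w [Hq0 Hr]]] := IH _ Hs' _ T'.
  rewrite catA in Hr.
  have [y [Hr1 Hr2]] := NSreach_split Hr.
  have : y \in B k by rewrite E; apply/HB; exists w.
  move/HB => [z' Hz']; apply: Hno; exists q0, z'; split => //.
  rewrite -(cat_take_drop k v) catA; exact: NSreach_cat Hr1 Hz'.
pose f (i : 'I_N.-1) := B i.+1.
have finj : injective f.
  move=> i j E; apply: ord_inj.
  have iN : i.+1 < N by have := ltn_ord i; lia.
  have jN : j.+1 < N by have := ltn_ord j; lia.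
  case: (ltngtP i j) => // H.
  - by move: (Hinj i.+1 j.+1 erefl H jN); rewrite /f in E; rewrite E eqxx.
  - by move: (Hinj j.+1 i.+1 erefl H iN); rewrite /f in E; rewrite E eqxx.
have Hsub : [set f i | i in 'I_N.-1] \subset
    [set X in powerset (~: QS) | (X != set0) && (X != ~: QS)].
  apply/subsetP => X /imsetP [i _ ->]; rewrite !inE ?powersetE.
  have iN : 0 < i.+1 < N by have := ltn_ord i; rewrite /=; lia.
  by move/and3P: (Hnot _ iN) => [-> -> ->].
have C := subset_leq_card Hsub.
rewrite card_imset // card_ord in C.
have := card_family K0 HKb.
move: C Hle; rewrite /N; lia.
Qed.

Theorem corollary4 (S : LFSA) (QS : {set state S}) (K : nat) :
  0 < K -> 2 ^ #|~: QS| < K + 2 ->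
  (strongly_inf_step_opaque QS <-> strongly_K_step_opaque QS K).
Proof.
move=> K0 HKb; split.
- move=> H q0 q1 q2 s1 s2 qs1 qs2 H0 R1 R2 H1 _; exact: H H0 R1 R2 H1.
- move=> HKo q0 q1 q2 s1 s2 qs1 qs2 H0 R1 R2 H1.
  apply: nsw_covered.
  have R := run_cat R1 R2.
  have Hh : has (fun p => p \in QS) (q0 :: qs1 ++ qs2).
    apply/hasP; exists q1 => //.
    by rewrite -cat_cons mem_cat -(run_last R1) mem_last.
  have [a [b [qa [qb [p [L Ra Hp Rb Nb]]]]]] := last_secret R Hh.
  rewrite -labw_cat L.
  apply: (@core S QS K p (labw a) K0 HKb _ (labw b) q2); last by exists b, qb; split.
  move=> v r [b' [qb' [Rb' Nb' Lb']]] Hsz.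
  rewrite -Lb'; apply: covered_nsw.
  apply: (HKo q0 p r a b' qa qb') => //.
  by rewrite Lb'.
Qed.
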